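(* Let $(n_i)_{i\ge1}$ be a strictly increasing sequence of natural numbers and set $C=\bigcup_{i\ge1}[n_i,2n_i)$. Then there exist a set $D\subseteq\mathbb{N}$ of upper density $0$ and a binary function $h\in\mathscr{C}_{I_{\bar d=0}}$ such that $h[C\times D]=\mathbb{N}$.
   Context: $\mathbb{N}=\{0,1,2,\dots\}$. For $A\subseteq\mathbb{N}$, $\bar d(A)=\limsup_{n\to\infty}\frac{|A\cap[0,n)|}{n}$. $\mathscr{C}_{I_{\bar d=0}}$ is the set of all finitary functions $f:\mathbb{N}^k\to\mathbb{N}$ ($k\ge1$) such that $\bar d(f[A^k])=0$ whenever $\bar d(A)=0$. Intervals are intervals of natural numbers. *)

(* Defs.v *)
From HB Require Import structures.
From mathcomp Require Import all_boot all_order all_algebra.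
From mathcomp Require Import all_classical all_reals.
From mathcomp Require Import topology normedtype sequences Rstruct.
Set Implicit Arguments. Unset Strict Implicit. Unset Printing Implicit Defensive.
Import Order.TTheory GRing.Theory Num.Theory.
Local Open Scope classical_set_scope.
Local Open Scope ring_scope.

Definition RR := Rdefinitions.R.

(* |A ∩ [0,n)| / n as a real number (0/0 = 0 for n = 0, irrelevant for limsup). *)
Definition dens_ratio (A : set nat) (n : nat) : RR :=
  (\sum_(i < n) ((i : nat) \in A)%:R) / n%:R.

Definition upper_density (A : set nat) : \bar RR :=
  limn_esup (fun n => (dens_ratio A n)%:E).

Definition image_pow (k : nat) (f : ('I_k -> nat) -> nat) (A : set nat) : set nat :=
  f @` [set v : 'I_k -> nat | forall i, A (v i)].

Definition in_clone_dzero (k : nat) (f : ('I_k -> nat) -> nat) : Prop :=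
  (1 <= k)%N /\
  forall A : set nat, upper_density A = 0%E -> upper_density (image_pow f A) = 0%E.

Definition binary_as_fun (h : nat -> nat -> nat) : ('I_2 -> nat) -> nat :=
  fun v => h (v ord0) (v ord_max).

(* Main.v *)
Require Import Defs.
From HB Require Import structures.
From mathcomp Require Import all_boot all_order all_algebra.
From mathcomp Require Import all_classical all_reals.
From mathcomp Require Import topology normedtype sequences Rstruct.
From mathcomp Require Import ereal zify.
Import Order.TTheory GRing.Theory Num.Theory.
Import numFieldNormedType.Exports.
Local Open Scope classical_set_scope.

Definition cnt (A : set nat) (N : nat) : nat := (\sum_(i < N) ((i:nat) \in A))%N.

Lemma cntS (A : set nat) N : cnt A N.+1 = (cnt A N + (N \in A))%N.
Proof. by rewrite /cnt big_ord_recr. Qed.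

Lemma cnt_le_N (A : set nat) N : (cnt A N <= N)%N.
Proof. elim: N => [|N IH]; first by rewrite /cnt big_ord0.
by rewrite cntS; case: (N \in A); lia. Qed.

Lemma cnt_mono (A : set nat) N P : (N <= P)%N -> (cnt A N <= cnt A P)%N.
Proof.
move=> /subnK <-; elim: (P - N)%N => [|k IH] //=.
by rewrite addSn cntS; apply: leq_trans IH (leq_addr _ _).
Qed.

Lemma cnt_sub (A B : set nat) N : (forall z, (z < N)%N -> A z -> B z) -> (cnt A N <= cnt B N)%N.
Proof.
move=> H; rewrite /cnt; apply: leq_sum => i _.
case: (boolP ((i:nat) \in A)) => // /set_mem hA.
by rewrite mem_set //; apply: H.
Qed.

Lemma cnt_U (A B : set nat) N : (cnt (A `|` B) N <= cnt A N + cnt B N)%N.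
Proof.
rewrite /cnt -big_split /=; apply: leq_sum => i _.
case: (boolP ((i:nat) \in A `|` B)) => // /set_mem [hA|hB].
  by rewrite mem_set.
by rewrite (mem_set hB) addn1.
Qed.

Lemma cnt_cap (A : set nat) N L : (forall z, A z -> (z < L)%N) -> (cnt A N <= cnt A L)%N.
Proof.
move=> H; have [NL|LN] := leqP N L; first exact: cnt_mono.
rewrite /cnt -(subnKC (ltnW LN)) big_split_ord /=.
rewrite -[X in (_ <= X)%N]addn0 -/(cnt A L); apply: leq_add => //.
rewrite big1 // => i _.
by case: (boolP (_ \in A)) => // /set_mem /H; rewrite ltnNge leq_addr.
Qed.

Lemma cnt_bound (A : set nat) N L : (forall z, A z -> (z < L)%N) -> (cnt A N <= L)%N.
Proof. by move=> H; exact: leq_trans (cnt_cap _ N _ H) (cnt_le_N _ _). Qed.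

Lemma cnt_split (A : set nat) N P :
  cnt A (N + P) = (cnt A N + \sum_(r < P) ((N + (r:nat)) \in A))%N.
Proof. by rewrite /cnt big_split_ord. Qed.

Definition blk (A : set nat) m := (\sum_(r < m) ((m + (r:nat)) \in A))%N.

Lemma blk_le (A : set nat) m : (blk A m <= cnt A (2 * m))%N.
Proof. by rewrite mul2n -addnn cnt_split leq_addl. Qed.

Lemma cnt_modset (A : set nat) m q : (0 < m)%N ->
  cnt [set z | A (m + z %% m)%N] (q * m) = (q * blk A m)%N.
Proof.
move=> m0; elim: q => [|q IH]; first by rewrite /cnt big_ord0.
rewrite mulSn addnC cnt_split IH mulSn addnC; congr (_ + _)%N.
apply: eq_bigr => r _; congr nat_of_bool.
apply/idP/idP => /set_mem H; apply/mem_set; move: H => /=;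
  by rewrite modnMDl modn_small.
Qed.

Lemma cnt_modset_le (A : set nat) m L : (0 < m)%N ->
  (cnt [set z | A (m + z %% m)%N] L <= (L %/ m).+1 * cnt A (2 * m))%N.
Proof.
move=> m0.
apply: leq_trans (cnt_mono _ _ ((L %/ m).+1 * m) _) _.
  by rewrite ltnW // ltn_ceil.
by rewrite cnt_modset // leq_mul2l blk_le orbT.
Qed.

Definition dz (A : set nat) : Prop :=
  forall K, (0 < K)%N -> exists N0, forall N, (N0 <= N)%N -> (K * cnt A N <= N)%N.

Section Seq.
Variable n : nat -> nat.
Hypothesis n_incr : forall i, (n i < n i.+1)%N.

Lemma n_ge i : (i <= n i)%N.
Proof. by elim: i => // i IH; exact: (leq_ltn_trans IH (n_incr i)). Qed.

Fixpoint ms t := match t with 0 => n 1 | t'.+1 => n (t'.+2 * ms t') end.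

Lemma ms_pos t : (0 < ms t)%N.
Proof.
elim: t => [|t IH] /=; first exact: leq_ltn_trans (leq0n _) (n_incr 0).
by apply: leq_trans (n_ge _); rewrite muln_gt0 IH.
Qed.

Lemma ms_grow t : (t.+2 * ms t <= ms t.+1)%N.
Proof. exact: n_ge. Qed.

Lemma ms_lt t : (ms t < ms t.+1)%N.
Proof.
apply: leq_trans (ms_grow t); have := ms_pos t; lia.
Qed.

Lemma ms_ge t : (t <= ms t)%N.
Proof. by elim: t => // t IH; exact: (leq_ltn_trans IH (ms_lt t)). Qed.

Lemma ms_mono t u : (t <= u)%N -> (ms t <= ms u)%N.
Proof.
move=> tu; apply: (@homo_leq nat ms (fun a b => (a <= b)%N)) tu => //.
  by move=> y x z; exact: leq_trans.
by move=> i; exact: ltnW (ms_lt i).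
Qed.

Lemma ms_in t : exists i, ms t = n i.
Proof. by case: t => [|t]; [exists 1%N | eexists]. Qed.

Lemma last_true (P : nat -> bool) N : P 0 -> ~~ P N -> exists T, P T /\ ~~ P T.+1.
Proof.
move=> P0; elim: N => [|N IH]; first by rewrite P0.
case: (boolP (P N)) => [PN nPN|]; first by exists N.
by move=> /IH.
Qed.

Lemma segment M : (ms 0 <= M)%N -> exists T, (ms T <= M < ms T.+1)%N.
Proof.
move=> H; have [|T [h1 h2]] := last_true (fun t => ms t <= M)%N M.+1 H.
  by rewrite -ltnNge; apply: leq_trans (ms_ge _).
by exists T; rewrite h1 ltnNge h2.
Qed.


Definition St (A : set nat) t : set nat := [set z | exists k x, A x /\
  (ms t <= x < 2 * ms t)%N /\ (x + k * ms t < ms t.+1)%N /\ z = (x + k * ms t)%N].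

Definition SS (A : set nat) : set nat := [set z | (z < ms 0)%N \/ exists t, St A t z].

Lemma St_prop A t z : St A t z ->
  [/\ A (ms t + z %% ms t)%N, (ms t <= z)%N & (z < ms t.+1)%N].
Proof.
move=> [k [x [Ax [/andP[h1 h2] [h3 ->]]]]]; split => //; last lia.
suff -> : ((x + k * ms t) %% ms t = x - ms t)%N by rewrite subnKC.
have e : (x + k * ms t = k.+1 * ms t + (x - ms t))%N by rewrite mulSn; lia.
rewrite e modnMDl modn_small //.
have := ms_pos t; lia.
Qed.

Lemma cnt_St A t L : (cnt (St A t) L <= (L %/ ms t).+1 * cnt A (2 * ms t))%N.
Proof.
apply: (leq_trans _ (cnt_modset_le A (ms t) L (ms_pos t))).
by apply: cnt_sub => z _ /St_prop [].
Qed.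

Lemma St_lt A t z : St A t z -> (z < ms t.+1)%N.
Proof. by case/St_prop. Qed.

Lemma dz_SS A : dz A -> dz (SS A).
Proof.
move=> hA K K0.
have [N0 HN0] := hA (16 * K)%N ltac:(rewrite muln_gt0 K0 //).
pose U0 := maxn (4 * K) N0.
exists (ms U0.+1) => M HM.
have [T /andP[T1 T2]] := segment M (leq_trans (ms_mono _ _ (leq0n _)) HM).
have UT : (U0 < T)%N.
  rewrite ltnNge; apply/negP => TU.
  have := ms_mono _ _ (TU : (T.+1 <= U0.+1)%N); lia.
case: T T1 T2 UT => [//|U] T1 T2 UT.
have U1 : (4 * K <= U)%N by have := leq_maxl (4 * K) N0; lia.
have U2 : (N0 <= U)%N by have := leq_maxr (4 * K) N0; lia.
have hsub : (cnt (SS A) M <= cnt ([set z | z < ms U]%N `|` St A U `|` St A U.+1) M)%N.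
  apply: cnt_sub => z zM [z0|[t Szt]].
    by left; left; apply: leq_trans z0 (ms_mono _ _ (leq0n _)).
  have [tU|Ut] := ltnP t U.
    by left; left; apply: leq_trans (St_lt _ _ _ Szt) (ms_mono _ _ tU).
  case: (ltngtP t U.+1) => [tU1|U1t|e]; last by right; rewrite -e.
    left; right; have e : t = U by lia.
    by rewrite -e.
  case/St_prop: Szt => _ h _; have := ms_mono _ _ U1t; lia.
apply: leq_trans (leq_mul (leqnn K) hsub) _.
have hU := cnt_U ([set z | z < ms U]%N `|` St A U) (St A U.+1) M.
have hU' := cnt_U [set z | z < ms U]%N (St A U) M.
have c0 : (cnt [set z | z < ms U]%N M <= ms U)%N by apply: cnt_bound.
have c1 : (cnt (St A U) M <= (ms U.+1 %/ ms U).+1 * cnt A (2 * ms U))%N.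
  apply: leq_trans (cnt_St A U _).
  apply: cnt_cap => z; exact: St_lt.
have c2 := cnt_St A U.+1 M.
have a1 : (16 * K * cnt A (2 * ms U) <= 2 * ms U)%N.
  by apply: HN0; have := ms_ge U; lia.
have a2 : (16 * K * cnt A (2 * ms U.+1) <= 2 * ms U.+1)%N.
  by apply: HN0; have := ms_ge U.+1; lia.
have d1 := leq_divM (ms U.+1) (ms U).
have d2 := leq_divM M (ms U.+1).
have g := ms_grow U.
have b1 : (16 * K * ((ms U.+1 %/ ms U).+1 * cnt A (2 * ms U)) <= 4 * M)%N.
  rewrite mulnCA; apply: leq_trans (leq_mul (leqnn _) a1) _.
  rewrite mulSn; have := ms_lt U; nia.
have b2 : (16 * K * ((M %/ ms U.+1).+1 * cnt A (2 * ms U.+1)) <= 4 * M)%N.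
  rewrite mulnCA; apply: leq_trans (leq_mul (leqnn _) a2) _.
  rewrite mulSn; nia.
have b0 : (4 * K * ms U <= M)%N.
  apply: leq_trans _ T1; apply: leq_trans g; rewrite leq_mul2r; lia.
nia.
Qed.

End Seq.

Lemma cnt0 N : cnt set0 N = 0%N.
Proof. by rewrite /cnt big1 // => i _; rewrite in_set0. Qed.

Lemma cnt1 a N : (cnt [set a] N <= 1)%N.
Proof.
apply: leq_trans (cnt_cap _ N a.+1 _) _; first by move=> z ->.
rewrite cntS.
have h0 : (cnt [set a] a <= cnt set0 a)%N.
  by apply: cnt_sub => z za /= zE; rewrite zE ltnn in za.
have := leq_b1 (a \in [set a]); rewrite cnt0 in h0; lia.
Qed.

Definition D : set nat := [set y | exists s, y = 4 ^ s]%N.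

Lemma cntD s : (cnt D (4 ^ s) <= s)%N.
Proof.
elim: s => [|s IH].
  rewrite expn0; apply: leq_trans (cnt_sub D set0 1 _) _; last by rewrite cnt0.
  by move=> z; rewrite ltnS leqn0 => /eqP -> [j] /esym/eqP; rewrite expn_eq0.
apply: leq_trans (cnt_sub _ ([set z | D z /\ z < 4 ^ s]%N `|` [set 4 ^ s]%N) _ _) _.
  move=> z zlt [j zE]; subst z; rewrite ltn_exp2l // in zlt.
  case: (ltngtP j s) => [js|sj|->]; last by right.
    by left; split; [exists j|rewrite ltn_exp2l].
  by move: zlt; rewrite ltnS leqNgt sj.
apply: leq_trans (cnt_U _ _ _) _.
rewrite -[s.+1]addn1; apply: leq_add; last exact: cnt1.
apply: leq_trans (cnt_cap _ _ (4 ^ s) _) _; first by move=> z [].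
by apply: leq_trans IH; apply: cnt_sub => z _ [].
Qed.

Lemma dzD : dz D.
Proof.
move=> K K0; exists (4 ^ K.+1)%N => N HN.
have N0 : (0 < N)%N by apply: leq_trans HN; rewrite expn_gt0.
have [hs1 hs2] := andP (trunc_log_bounds (isT : 1 < 4)%N N0).
set s := trunc_log 4 N in hs1 hs2.
have Ks : (K.+1 <= s)%N by apply: trunc_log_max.
have c : (cnt D N <= s.+1)%N.
  by apply: leq_trans (cnt_mono _ _ _ (ltnW hs2)) (cntD _).
apply: leq_trans (leq_mul (leqnn K) c) _.
apply: leq_trans hs1.
have e : (4 ^ s = 2 ^ s * 2 ^ s)%N by rewrite -expnMn.
rewrite e; apply: leq_mul.
  apply: leq_trans (ltnW (ltn_expl K (isT : 1 < 2)%N)) _.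
  by rewrite leq_exp2l // ltnW.
exact: ltn_expl.
Qed.

Definition hfun n (x y : nat) : nat :=
  match (unpickle (trunc_log 4 y) : option (nat + nat * nat)) with
  | Some (inl v) => if (v < ms n 0)%N then v else 0%N
  | Some (inr (t, k)) =>
      if (ms n t <= x < 2 * ms n t)%N && (x + k * ms n t < ms n t.+1)%N
      then (x + k * ms n t)%N else 0%N
  | None => 0%N
  end.

Lemma h_in_SS n (n_incr : forall i, (n i < n i.+1)%N) (A : set nat) x y :
  A x -> SS n A (hfun n x y).
Proof.
move=> Ax; have p0 := ms_pos n n_incr 0.
rewrite /hfun; case: (unpickle _) => [[v|[t k]]|]; try by left.
  by case: ifP => //= h; left.
case: ifP => [/andP[h1 h2]|_]; last by left.
by right; exists t, k, x.
Qed.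

Lemma hfun_code n x (c : nat + nat * nat) :
  hfun n x (4 ^ pickle c) =
  match c with
  | inl v => if (v < ms n 0)%N then v else 0%N
  | inr (t, k) =>
      if (ms n t <= x < 2 * ms n t)%N && (x + k * ms n t < ms n t.+1)%N
      then (x + k * ms n t)%N else 0%N
  end.
Proof. by rewrite /hfun trunc_expnK // pickleK; case: c => [|[]]. Qed.

Lemma h_surj n (n_incr : forall i, (n i < n i.+1)%N) v :
  exists x y, (exists i, (n i <= x < 2 * n i)%N) /\ D y /\ hfun n x y = v.
Proof.
have p0 := ms_pos n n_incr 0.
have [vs|vb] := ltnP v (ms n 0).
  exists (ms n 0), (4 ^ pickle (inl v : nat + nat * nat))%N; split; last split.
  - exists 1%N => /=; simpl in p0; lia.
  - by eexists.
  - by rewrite hfun_code vs.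
have [T /andP[T1 T2]] := segment n n_incr v vb.
have pT := ms_pos n n_incr T.
set m := ms n T in T1 T2 pT.
have [i mi] := ms_in n T.
have q1 : (1 <= v %/ m)%N by rewrite divn_gt0.
have e := divn_eq v m.
have r := ltn_pmod v pT.
exists (m + v %% m)%N, (4 ^ pickle (inr (T, (v %/ m).-1) : nat + nat * nat))%N.
split; last split.
- exists i; rewrite -mi; lia.
- by eexists.
rewrite hfun_code -/m.
have e2 : (m + v %% m + (v %/ m).-1 * m = v)%N.
  rewrite {3}e; case: (v %/ m) q1 => // q _ /=; rewrite mulSn; lia.
rewrite e2 T2 andbT ifT //; lia.
Qed.

Local Open Scope ring_scope.

Lemma dens_ratioE A N : dens_ratio A N = (cnt A N)%:R / N%:R.
Proof. by rewrite /dens_ratio /cnt natr_sum. Qed.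

Lemma ratio_ge0 A N : 0 <= dens_ratio A N.
Proof. by rewrite dens_ratioE divr_ge0. Qed.

Lemma dz_ud A : dz A -> upper_density A = 0%E.
Proof.
move=> H.
pose u := (fun n => (dens_ratio A n)%:E).
suff : u @ \oo --> 0%:E.
  by move/cvg_limn_einf_sup => [_].
apply/fine_cvgP; split; first by apply: nearW.

apply/cvgr0Pnorm_le => eps eps0.
have [K [K0 HK]] : exists K, (0 < K)%N /\ K%:R^-1 < eps.
  exists (Num.truncn (eps^-1)).+1; split => //.
  have h := truncnS_gt (eps^-1).
    by rewrite -[_^-1]mul1r ltr_pdivrMr ?ltr0n // -{1}(divff (lt0r_neq0 eps0)) ltr_pM2l.
have [N0 HN0] := H K K0.
near=> N => /=.
have N0N : (N0 <= N)%N by near: N; exists N0.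
have N1 : (1 <= N)%N by near: N; exists 1%N.
rewrite ger0_norm ?ratio_ge0 // dens_ratioE ler_pdivrMr ?ltr0n //.
have h1 : (K * cnt A N)%:R <= (N%:R : RR) by rewrite ler_nat HN0.
rewrite natrM in h1.
apply: (le_trans (y := K%:R^-1 * N%:R)).
  by rewrite ler_pdivlMl ?ltr0n.
by rewrite ler_wpM2r // ltW.
Unshelve. all: by end_near.
Qed.

Lemma ud_dz A : upper_density A = 0%E -> dz A.
Proof.
move=> H0 K K0.
pose u := (fun n => (dens_ratio A n)%:E).
have : u @ \oo --> 0%:E.
  apply: limn_esup_le_cvg; first by move: H0; rewrite /upper_density => ->.
  by move=> n; rewrite lee_fin ratio_ge0.
move/fine_cvgP => [_ /cvgr0Pnorm_le /(_ (K%:R^-1) _)].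
rewrite invr_gt0 ltr0n => /(_ K0) [N0 _ HN0].
exists (maxn N0 1) => N; rewrite geq_max => /andP[N0N N1].
have := HN0 N N0N; rewrite /= ger0_norm ?ratio_ge0 // dens_ratioE.
rewrite ler_pdivrMr ?ltr0n // => h.
rewrite -(ler_nat RR) natrM.
by rewrite -ler_pdivlMl ?ltr0n.
Qed.

Lemma dz_sub (A B : set nat) : A `<=` B -> dz B -> dz A.
Proof.
move=> AB hB K K0; have [N0 H] := hB K K0; exists N0 => N /H.
apply: leq_trans; rewrite leq_mul2l; apply/orP; right.
by apply: cnt_sub => z _ /AB.
Qed.

Theorem mainTheorem11 (n : nat -> nat) (n_incr : forall i, (n i < n i.+1)%N) :
  let C := [set m : nat | exists i, (n i <= m < 2 * n i)%N] in
  exists (D : set nat) (h : nat -> nat -> nat),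
    upper_density D = 0%E /\
    in_clone_dzero (binary_as_fun h) /\
    [set h x y | x in C & y in D] = [set: nat].
Proof.
move=> C; exists D, (hfun n); split; first exact: dz_ud dzD.
split.
  split => // A /ud_dz hA; apply: dz_ud.
  apply: (dz_sub _ _ _ (dz_SS n n_incr A hA)).
  move=> z [v hv <-]; rewrite /binary_as_fun.
  exact: h_in_SS (hv ord0).
apply/seteqP; split => // v _.
have [x [y [xC [Dy e]]]] := h_surj n n_incr v.
by exists x => //; exists y.
Qed.
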